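(* Let $n \geq 1$ and let $B$ be a log-product expression with $L(B) \subseteq P_n$. Then $|L(B)|\leq n! \cdot 4^{1-n} n^{\frac14 [ 3+\log n ]}$.
   Context: $P_n$ is the language of all permutations of the alphabet $\Sigma=\{1,\dots,n\}$, i.e. words of length $n$ in which each letter of $\Sigma$ occurs exactly once. Regular expressions (without star, without $\emptyset$) are built from $\epsilon$ and letters by union and concatenation. A homogeneous expression describes a language all of whose words have the same length, its degree $\deg R$. A homogeneous expression $B$ is log-product if it is a letter, or there are homogeneous expressions $B_1,B_2$ with $B_1$ log-product, $\deg B_1\ge\deg B_2$ and $B=B_1B_2$ or $B=B_2B_1$. Logarithms are base 2. *)

(* Defs.v *)
From Stdlib Require Import Reals.
From mathcomp Require Import all_boot.

Set Implicit Arguments.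
Unset Strict Implicit.
Unset Printing Implicit Defensive.

Inductive regexp : Type :=
  | Eps : regexp
  | Sym : nat -> regexp
  | Union : regexp -> regexp -> regexp
  | Concat : regexp -> regexp -> regexp.

(* The (finite) language of an expression, as a list of words
   (possibly with repetitions; the language is the set of its elements). *)
Fixpoint lang (r : regexp) : seq (seq nat) :=
  match r with
  | Eps => [:: [::]]
  | Sym a => [:: [:: a]]
  | Union r1 r2 => lang r1 ++ lang r2
  | Concat r1 r2 => [seq u ++ v | u <- lang r1, v <- lang r2]
  end.

Definition card_lang (r : regexp) : nat := size (undup (lang r)).

Definition homogeneous_of (r : regexp) (d : nat) : Prop :=
  forall w, w \in lang r -> size w = d.

Inductive log_product : regexp -> Prop :=
  | lp_sym : forall a, log_product (Sym a)
  | lp_concat_l : forall B1 B2 d1 d2,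
      log_product B1 -> homogeneous_of B1 d1 -> homogeneous_of B2 d2 ->
      (d2 <= d1)%N -> log_product (Concat B1 B2)
  | lp_concat_r : forall B1 B2 d1 d2,
      log_product B1 -> homogeneous_of B1 d1 -> homogeneous_of B2 d2 ->
      (d2 <= d1)%N -> log_product (Concat B2 B1).

Definition is_perm_word (n : nat) (w : seq nat) : bool := perm_eq w (iota 1 n).

Definition log2 (x : R) : R := Rdiv (ln x) (ln (IZR 2)).

(* Main.v *)
Require Import Defs.
From Stdlib Require Import Reals Lra Lia Psatz.
From mathcomp Require Import all_boot zify.
Lemma lang_ne r : exists w, w \in lang r.
Proof.
elim: r => [|a|r1 [w1 h1] r2 _|r1 [w1 h1] r2 [w2 h2]] /=.
- by exists [::]; rewrite inE.
- by exists [:: a]; rewrite inE.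
- by exists w1; rewrite mem_cat h1.
- exists (w1 ++ w2). exact: allpairs_f.
Qed.

Lemma card_concat r1 r2 : (card_lang (Concat r1 r2) <= card_lang r1 * card_lang r2)%N.
Proof.
rewrite /card_lang /= -(size_allpairs cat).
apply: uniq_leq_size; first exact: undup_uniq.
move=> w; rewrite mem_undup => /allpairsP [[u v] [/= hu hv ->]].
by apply: allpairs_f; rewrite mem_undup.
Qed.

Lemma card_perm r s : uniq s -> (forall w, w \in lang r -> perm_eq w s) ->
  (card_lang r <= (size s)`!)%N.
Proof.
move=> us h. rewrite /card_lang -(size_permutations us).
apply: uniq_leq_size; first exact: undup_uniq.
move=> w; rewrite mem_undup mem_permutations. exact: h.
Qed.

Lemma lp_size B : log_product B -> forall w, w \in lang B -> (0 < size w)%N.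
Proof.
elim => [a|B1 B2 d1 d2 _ IH _ _ _|B1 B2 d1 d2 _ IH _ _ _] w /=.
- by rewrite inE => /eqP ->.
- move=> /allpairsP [[u v] [/= hu hv ->]]. rewrite size_cat. by rewrite addn_gt0 (IH _ hu).
- move=> /allpairsP [[u v] [/= hu hv ->]]. rewrite size_cat. by rewrite addn_gt0 (IH _ hv) orbT.
Qed.

Lemma split_perm r1 r2 s : uniq s ->
  (forall w, w \in lang (Concat r1 r2) -> perm_eq w s) ->
  exists u0 v0, uniq u0 /\ uniq v0 /\ size s = (size u0 + size v0)%N /\
    u0 \in lang r1 /\ v0 \in lang r2 /\
    (forall u, u \in lang r1 -> perm_eq u u0) /\
    (forall v, v \in lang r2 -> perm_eq v v0).
Proof.
move=> us h.
have [u0 hu0] := lang_ne r1. have [v0 hv0] := lang_ne r2.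
have h0 : perm_eq (u0 ++ v0) s by apply: h; apply: allpairs_f.
have : uniq (u0 ++ v0) by rewrite (perm_uniq h0).
rewrite cat_uniq => /and3P [uu _ uv].
exists u0, v0; split; first done. split; first done.
split; first by rewrite -(perm_size h0) size_cat.
split; first done. split; first done.
split.
- move=> u hu. rewrite -(perm_cat2r v0).
  have h1 : perm_eq (u ++ v0) s by apply: h; apply: allpairs_f.
  by rewrite (perm_trans h1) // perm_sym.
- move=> v hv. rewrite -(perm_cat2l u0).
  have h1 : perm_eq (u0 ++ v) s by apply: h; apply: allpairs_f.
  by rewrite (perm_trans h1) // perm_sym.
Qed.
Open Scope R_scope.
Lemma INR_muln m n : INR (m * n)%N = INR m * INR n.
Proof. exact: mult_INR. Qed.
Lemma INR_fact n : INR (n.+1)`! = INR n.+1 * INR n`!.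
Proof. by rewrite factS INR_muln. Qed.
Lemma INR_fact_pos n : 0 < INR n`!.
Proof. apply: lt_0_INR. apply/ltP. exact: fact_gt0. Qed.

Lemma base_real j : (1 <= j)%N ->
  (4 ^ j * INR j`! ^ 2) ^ 2 <= 4 * INR j * INR (2 * j)`! ^ 2.
Proof.
elim: j => [//|j IH] _.
case: j IH => [|j] IH.
  rewrite /= . lra.
move: (IH isT) => {IH}.
set J := j.+1 => H.
have -> : (2 * J.+1 = (2*J).+2)%N by rewrite mulnS.
have eJ : INR J.+1 = INR J + 1 by rewrite S_INR.
have e1 : INR (2*J).+1 = 2 * INR J + 1 by rewrite S_INR INR_muln.
have e2 : INR (2*J).+2 = 2 * INR J + 2 by rewrite S_INR e1; ring.
have f1 : INR (J.+1)`! = (INR J + 1) * INR J`! by rewrite INR_fact eJ.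
have f2 : INR ((2*J).+2)`! = (2 * INR J + 2) * ((2 * INR J + 1) * INR (2*J)`!)
  by rewrite !INR_fact e1 e2.
rewrite f1 f2 eJ.
have Jpos : 1 <= INR J by apply: (le_INR 1); apply/leP.
move: H.
set F := INR J`!. set G := INR (2*J)`!. 
move=> H.
set X := (4 ^ J * F ^ 2) ^ 2.
have -> : (4 ^ J.+1 * ((INR J + 1) * F) ^ 2) ^ 2 = X * (16 * (INR J + 1)^4).
  rewrite /X /=. ring.
have -> : 4 * (INR J + 1) * ((2 * INR J + 2) * ((2 * INR J + 1) * G)) ^ 2
   = (4 * INR J * G^2) * ((INR J + 1)^3 * (2 * INR J + 1)^2 * 4 / INR J).
  field. lra.
apply: Rle_trans (Rmult_le_compat_r _ _ _ _ H) _.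
  have := pow_le (INR J + 1) 4. lra.
apply: Rmult_le_compat_l.
  have := pow2_ge_0 G; nra.
apply: (Rmult_le_reg_r (INR J)); first lra.
have -> : (INR J + 1)^3 * (2*INR J+1)^2 * 4 / INR J * INR J = (INR J + 1)^3 * (2*INR J+1)^2 * 4 by field; lra.
have := pow_le (INR J + 1) 3. 
nra.
Qed.

Definition phi (x : R) : R := (3 + ln x / ln 2) / 4 * ln x.

Lemma ln2_pos : 0 < ln 2.
Proof. have := ln_lt_2. lra. Qed.

Lemma ln_le_sub1 y : 0 < y -> ln y <= y - 1.
Proof.
move=> y0. case: (Req_dec (ln y) 0) => h.
  have : exp (ln y) = exp 0 by rewrite h.
  rewrite exp_ln // exp_0. lra.
have := exp_ineq1 _ h. rewrite exp_ln //. lra.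
Qed.

Lemma ln_diff p q : 0 < p -> 0 < q -> ln p - ln q <= p / q - 1.
Proof.
move=> p0 q0.
have -> : p = q * (p / q) by field; lra.
rewrite ln_mult //; last by apply: Rdiv_lt_0_compat.
have -> : q * (p / q) / q = p / q by field; lra.
have := ln_le_sub1 (p / q) (Rdiv_lt_0_compat _ _ p0 q0). lra.
Qed.

Lemma ln_le x y : 0 < x -> x <= y -> ln x <= ln y.
Proof.
move=> x0 [h|->]; last lra.
by apply: Rlt_le; apply: ln_increasing.
Qed.

Lemma key_ineq c l0 l1 l2 : 0 < c ->
  0 <= 4 * c * (l2 - l1) + (3 * c + 2 * l1) * ((l2 - l1) - (l1 - l0)) + (l1 - l0)^2 + (l2 - l1)^2 ->
  l1 + 2 * ((3 + l1 / c) / 4 * l1) <= l2 + (3 + l0 / c) / 4 * l0 + (3 + l2 / c) / 4 * l2.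
Proof.
move=> c0 H.
apply: (Rmult_le_reg_l (4 * c)); first lra.
have -> : 4 * c * (l2 + (3 + l0 / c) / 4 * l0 + (3 + l2 / c) / 4 * l2) =
   4 * c * l2 + 3 * c * l0 + l0 ^ 2 + 3 * c * l2 + l2 ^ 2 by field; lra.
have -> : 4 * c * (l1 + 2 * ((3 + l1 / c) / 4 * l1)) =
   4 * c * l1 + 6 * c * l1 + 2 * l1 ^ 2 by field; lra.
nra.
Qed.

Lemma rho_step x : 1 <= x -> (x = 1 \/ 2 * ln (x + 1) <= (4 * x - 3) * ln 2) ->
  ln (x + 1) + 2 * phi (x + 1) <= ln (x + 2) + phi x + phi (x + 2).
Proof.
move=> x1 hx. rewrite /phi. apply: key_ineq; first exact: ln2_pos.
have c0 := ln2_pos.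
case: hx => [->|hx].
  rewrite ln_1.
  have -> : 1 + 1 = 2 by ring.
  have -> : 1 + 2 = 3 by ring.
  have h3 : 3 * ln 2 <= 2 * ln 3.
    have -> : 3 * ln 2 = ln (2 ^ 3) by rewrite ln_pow; [simpl; ring | lra].
    have -> : 2 * ln 3 = ln (3 ^ 2) by rewrite ln_pow; [simpl; ring | lra].
    apply: ln_le; simpl; lra.
  nra.
have hb : 1 / (x + 2) <= ln (x + 2) - ln (x + 1).
  have := ln_diff (x + 1) (x + 2) ltac:(lra) ltac:(lra).
  have -> : (x + 1) / (x + 2) - 1 = - (1 / (x + 2)) by field; lra.
  lra.
have hab : (ln (x + 1) - ln x) - (ln (x + 2) - ln (x + 1)) <= 1 / (x * (x + 2)).
  have := ln_diff ((x + 1) * (x + 1)) (x * (x + 2)) ltac:(nra) ltac:(nra).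
  rewrite !ln_mult; try lra.
  have -> : (x + 1) * (x + 1) / (x * (x + 2)) - 1 = 1 / (x * (x + 2)) by field; lra.
  lra.
have l1p : 0 <= ln (x + 1).
  rewrite -ln_1. apply: ln_le; lra.
have vx : 1 / (x * (x + 2)) * x = 1 / (x + 2) by field; lra.
have v0 : 0 <= 1 / (x * (x + 2)) by apply: Rlt_le; apply: Rdiv_lt_0_compat; nra.
move: c0 hx hb hab l1p vx v0.
generalize (ln 2) (ln x) (ln (x+1)) (ln (x+2)) (1 / (x + 2)) (1 / (x * (x + 2))).
move=> c l0 l1 l2 u v c0 hx hb hab l1p vx v0.
have s1 : (3 * c + 2 * l1) * ((l1 - l0) - (l2 - l1)) <= (3 * c + 2 * l1) * v.
  apply: Rmult_le_compat_l; lra.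
have s2 : (3 * c + 2 * l1) * v <= (4 * x * c) * v.
  apply: Rmult_le_compat_r; lra.
have s3 : (4 * x * c) * v = 4 * c * u by rewrite -vx; ring.
have s4 : 4 * c * u <= 4 * c * (l2 - l1) by apply: Rmult_le_compat_l; lra.
have := pow2_ge_0 (l1 - l0). have := pow2_ge_0 (l2 - l1). lra.
Qed.

Lemma sq_bound k : (2 <= k)%N -> 8 * (INR k + 1) ^ 2 <= 16 ^ k.
Proof.
elim: k => [//|k IH] hk.
case: (ltnP 2 k.+1) => h.
  have := IH h. rewrite S_INR /=.
  have : 2 <= INR k by apply: (le_INR 2); apply/leP.
  nra.
have -> : k = 1%N by lia.
simpl; lra.
Qed.

Lemma rho_step_nat k : (1 <= k)%N ->
  ln (INR k + 1) + 2 * phi (INR k + 1) <= ln (INR k + 2) + phi (INR k) + phi (INR k + 2).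
Proof.
move=> hk. apply: rho_step.
  by apply: (le_INR 1); apply/leP.
case: (ltnP 1 k) => h; last by left; have -> : k = 1%N by lia.
right.
have kp := pos_INR k.
have pp : 0 < 8 * (INR k + 1) ^ 2 by nra.
have := ln_le _ _ pp (@sq_bound k h).
have p1 : 0 < (INR k + 1) ^ 2 by nra.
rewrite (ln_mult 8) //; last lra.
rewrite !ln_pow; try lra.
have -> : ln 16 = 4 * ln 2.
  have -> : 16 = 2 ^ 4 by simpl; ring.
  rewrite ln_pow; [simpl; ring| lra].
have -> : ln 8 = 3 * ln 2.
  have -> : 8 = 2 ^ 3 by simpl; ring.
  rewrite ln_pow; [simpl; ring| lra].
simpl. lra.
Qed.

Definition rho (k : nat) : R := ln (INR k + 1) + phi (INR k + 1) - phi (INR k).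

Lemma rho_mono k n : (1 <= k)%N -> (k <= n)%N -> rho k <= rho n.
Proof.
move=> hk; elim: n => [|n IH] hn; first by lia.
case: (ltnP k n.+1) => h; last first.
  have e : k = n.+1 by lia.
  rewrite e; lra.
apply: Rle_trans (IH h) _.
have := @rho_step_nat n (leq_trans hk h).
rewrite /rho S_INR.
have -> : INR n + 1 + 1 = INR n + 2 by ring.
lra.
Qed.

Lemma exp_le x y : x <= y -> exp x <= exp y.
Proof. move=> [h|->]; last lra. by apply: Rlt_le; apply: exp_increasing. Qed.

Lemma rho_exp k : INR k.+1 * exp (phi (INR k.+1)) = exp (rho k) * exp (phi (INR k)).
Proof.
rewrite -exp_plus /rho S_INR.
have -> : ln (INR k + 1) + phi (INR k + 1) - phi (INR k) + phi (INR k) =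
  ln (INR k + 1) + phi (INR k + 1) by ring.
rewrite exp_plus exp_ln //. have := pos_INR k. lra.
Qed.

Lemma Q_base j : (1 <= j)%N ->
  INR j`! * INR j`! * 4 ^ j * exp (phi (INR j)) <= INR (j + j)`! * exp (phi (INR (j + j))).
Proof.
move=> hj.
have jp : 1 <= INR j by apply: (le_INR 1); apply/leP.
have c0 := ln2_pos.
have e2 : INR (j + j) = 2 * INR j by rewrite plus_INR; ring.
have ephi : phi (INR (j + j)) = phi (INR j) + (ln 2 + ln (INR j) / 2).
  rewrite e2 /phi ln_mult; try lra. field. lra.
rewrite ephi exp_plus.
set E := exp (ln 2 + ln (INR j) / 2).
have EE : E * E = 4 * INR j.
  rewrite /E -exp_plus.
  have -> : ln 2 + ln (INR j) / 2 + (ln 2 + ln (INR j) / 2) = ln 2 + (ln 2 + ln (INR j)) by field.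
  rewrite !exp_plus !exp_ln; lra.
have E0 : 0 < E by apply: exp_pos.
have := @base_real j hj.
have -> : (2 * j)%N = (j + j)%N by lia.
have Gp := INR_fact_pos (j + j).
have Fp := INR_fact_pos j.
have P0 : 0 < 4 ^ j by apply: pow_lt; lra.
have Xp : 0 < exp (phi (INR j)) by apply: exp_pos.
move: Gp Fp P0 Xp EE E0.
generalize (INR (j + j)`!) (INR j`!) (4 ^ j) (exp (phi (INR j))) E.
move=> G F P X E' Gp Fp P0 Xp EE E0 H.
have A0 : 0 < P * F ^ 2 by apply: Rmult_lt_0_compat => //; apply: pow_lt.
have HA : P * F ^ 2 <= G * E'.
  apply: Rnot_lt_le => hc.
  have : (G * E') ^ 2 < (P * F ^ 2) ^ 2.
    have : 0 < G * E' by nra.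
    nra.
  have -> : (G * E') ^ 2 = 4 * INR j * G ^ 2 by rewrite -EE; ring.
  lra.

have -> : F * F * P * X = (P * F ^ 2) * X by ring.
have -> : G * (X * E') = (G * E') * X by ring.
by apply: Rmult_le_compat_r; lra.
Qed.

Lemma Q_all j i : (1 <= j)%N ->
  INR (j + i)`! * INR j`! * 4 ^ j * exp (phi (INR (j + i)))
    <= INR (j + i + j)`! * exp (phi (INR (j + i + j))).
Proof.
move=> hj. elim: i => [|i IH].
  rewrite addn0. exact: Q_base.
have -> : (j + i.+1 = (j + i).+1)%N by lia.
have -> : ((j + i).+1 + j = (j + i + j).+1)%N by lia.
set k := (j + i)%N. set n := (j + i + j)%N.
have hkn : (k <= n)%N by lia.
have hk : (1 <= k)%N by lia.
have r := @rho_mono k n hk hkn.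
rewrite (INR_fact k) (INR_fact n).
have -> : INR k.+1 * INR k`! * INR j`! * 4 ^ j * exp (phi (INR k.+1)) =
   (INR k`! * INR j`! * 4 ^ j) * (INR k.+1 * exp (phi (INR k.+1))) by ring.
have -> : INR n.+1 * INR n`! * exp (phi (INR n.+1)) =
   INR n`! * (INR n.+1 * exp (phi (INR n.+1))) by ring.
rewrite !rho_exp.
have Er := @exp_le _ _ r.
have -> : INR k`! * INR j`! * 4 ^ j * (exp (rho k) * exp (phi (INR k))) = 
  (INR k`! * INR j`! * 4 ^ j * exp (phi (INR k))) * exp (rho k) by ring.
apply: Rle_trans (Rmult_le_compat_r _ _ _ (Rlt_le _ _ (exp_pos _)) IH) _.
have -> : INR n`! * (exp (rho n) * exp (phi (INR n))) =
  (INR n`! * exp (phi (INR n))) * exp (rho n) by ring.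
apply: Rmult_le_compat_l => //.
apply: Rlt_le; apply: Rmult_lt_0_compat; [exact: INR_fact_pos | exact: exp_pos].
Qed.

Definition gb (n : nat) : R :=
  Rmult (Rmult (INR (factorial n)) (Rpower (IZR 4) (Rminus (IZR 1) (INR n))))
        (Rpower (INR n) (Rdiv (Rplus (IZR 3) (log2 (INR n))) (IZR 4))).

Lemma gb_exp n : gb n = INR n`! * Rpower 4 (1 - INR n) * exp (phi (INR n)).
Proof. reflexivity. Qed.

Lemma g_step k j : (1 <= k)%N -> (j <= k)%N -> gb k * INR j`! <= gb (k + j).
Proof.
move=> hk hjk.
case: (posnP j) => hj.
  rewrite hj addn0 /= . lra.
have [i ->] : exists i, k = (j + i)%N by exists (k - j)%N; lia.
rewrite !gb_exp.
have -> : 1 - INR (j + i) = (1 - INR (j + i + j)) + INR j by rewrite !plus_INR; ring.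
rewrite Rpower_plus Rpower_pow; last lra.
have Pp : 0 < Rpower 4 (1 - INR (j + i + j)) by apply: exp_pos.
have := @Q_all j i hj.
move: Pp. generalize (Rpower 4 (1 - INR (j + i + j))) => P Pp H.
have -> : INR (j + i)`! * (P * 4 ^ j) * exp (phi (INR (j + i))) * INR j`! =
  P * (INR (j + i)`! * INR j`! * 4 ^ j * exp (phi (INR (j + i)))) by ring.
have -> : INR (j + i + j)`! * P * exp (phi (INR (j + i + j))) =
  P * (INR (j + i + j)`! * exp (phi (INR (j + i + j)))) by ring.
by apply: Rmult_le_compat_l; lra.
Qed.

Lemma gb_pos n : 0 <= gb n.
Proof.
rewrite gb_exp. have := INR_fact_pos n. have := exp_pos (phi (INR n)).
have : 0 < Rpower 4 (1 - INR n) by apply: exp_pos.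
move=> a b c. apply: Rlt_le. apply: Rmult_lt_0_compat => //. exact: Rmult_lt_0_compat.
Qed.

Lemma main_gen B : log_product B -> forall s, uniq s ->
  (forall w, w \in lang B -> perm_eq w s) -> INR (card_lang B) <= gb (size s).
Proof.
elim => [a|B1 B2 d1 d2 lp1 IH h1 h2 hd|B1 B2 d1 d2 lp1 IH h1 h2 hd] s us hs.
- have hw : perm_eq [:: a] s by apply: hs; rewrite inE.
  rewrite -(perm_size hw) /card_lang /= gb_exp /=.
  rewrite /phi ln_1. 
  have -> : 1 - 1 = 0 by ring.
  rewrite Rpower_O; last lra.
  have -> : (3 + 0 / ln 2) / 4 * 0 = 0 by field; have := ln2_pos; lra.
  rewrite exp_0. lra.
- have [u0 [v0 [uu [uv [es [hu0 [hv0 [pu pv]]]]]]]] := @split_perm _ _ s us hs.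
  have c1 := IH _ uu pu.
  have c2 := @card_perm _ _ uv pv.
  have k1 : (1 <= size u0)%N by exact: (@lp_size _ lp1 _ hu0).
  have hjk : (size v0 <= size u0)%N by rewrite (h1 _ hu0) (h2 _ hv0).
  have := @g_step _ _ k1 hjk. rewrite -es => g.
  apply: Rle_trans (le_INR _ _ (leP (card_concat B1 B2))) _.
  rewrite INR_muln. apply: Rle_trans g.
  apply: Rmult_le_compat => //; try exact: pos_INR.
  exact: le_INR (leP c2).
- have [u0 [v0 [uu [uv [es [hu0 [hv0 [pu pv]]]]]]]] := @split_perm _ _ s us hs.
  have c1 := IH _ uv pv.
  have c2 := @card_perm _ _ uu pu.
  have k1 : (1 <= size v0)%N by exact: (@lp_size _ lp1 _ hv0).
  have hjk : (size u0 <= size v0)%N by rewrite (h1 _ hv0) (h2 _ hu0).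
  have := @g_step _ _ k1 hjk. rewrite addnC -es => g.
  apply: Rle_trans (le_INR _ _ (leP (card_concat B2 B1))) _.
  rewrite INR_muln Rmult_comm. apply: Rle_trans g.
  apply: Rmult_le_compat => //; try exact: pos_INR.
  exact: le_INR (leP c2).
Qed.

Close Scope R_scope.

Theorem lemma7p6 (n : nat) (B : regexp) :
  (1 <= n)%N ->
  log_product B ->
  (forall w, w \in lang B -> is_perm_word n w) ->
  Rle (INR (card_lang B))
      (Rmult (Rmult (INR (factorial n)) (Rpower (IZR 4) (Rminus (IZR 1) (INR n))))
             (Rpower (INR n) (Rdiv (Rplus (IZR 3) (log2 (INR n))) (IZR 4)))).
Proof.
move=> _ lp hw.
have := @main_gen B lp _ (iota_uniq 1 n) hw.
by rewrite size_iota.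
Qed.
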